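(* Let $0<c_0<C_0<\infty$ and $\bar\lambda_{m,n}>0$ with $C_0\bar\lambda_{m,n}\le 1/2$, and let $K\ge1$. There exist constants $C_{\mathrm L},C_{\mathrm U}>0$ depending only on $c_0,C_0$ such that for all $\Lambda,\Lambda'\in\mathcal{L}_{K,\bar\lambda_{m,n}}$, $$\frac{C_{\mathrm L}}{\bar\lambda_{m,n}}\|\Lambda-\Lambda'\|_F^2\le \mathrm{d}_{\mathrm{KL}}\big(P^{(nm)}_\Lambda\,\big\|\,P^{(nm)}_{\Lambda'}\big)\le\frac{C_{\mathrm U}}{\bar\lambda_{m,n}}\|\Lambda-\Lambda'\|_F^2.$$
   Context: $\mathcal{L}_{K,\bar\lambda_{m,n}}:=\{\Lambda=(\lambda_{ij})\in\mathbb{R}_+^{n\times m}:\mathrm{rank}(\Lambda)\le K,\ c_0\bar\lambda_{m,n}\le\lambda_{ij}\le C_0\bar\lambda_{m,n}\ \forall (i,j)\in[n]\times[m]\}$. For $\Lambda$ in this class, $P^{(nm)}_\Lambda:=\bigotimes_{i=1}^n\bigotimes_{j=1}^m\mathrm{Bern}(1-e^{-\lambda_{ij}})$ is a product of Bernoulli laws on $\{0,1\}^{n\times m}$. $\mathrm{d}_{\mathrm{KL}}$ is the Kullback–Leibler divergence and $\|\cdot\|_F$ the Frobenius norm. *)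

(* Defs.v *)
From HB Require Import structures.
From mathcomp Require Import all_boot all_order all_algebra.
From mathcomp Require Import all_classical all_reals all_analysis.
Set Implicit Arguments. Unset Strict Implicit. Unset Printing Implicit Defensive.
Import Order.TTheory GRing.Theory Num.Theory.
Local Open Scope ring_scope.

(* Kullback-Leibler divergence between two probability mass functions on a
   finite type: sum_x P x * ln (P x / Q x).  (Convention 0 ln 0 = 0 holds since
   P x = 0 kills the term; in the application all masses are positive.) *)
Definition dKL (R : realType) (T : finType) (P Q : T -> R) : R :=
  \sum_(x : T) P x * ln (P x / Q x).

Definition bern_pmf (R : realType) (p : R) (b : bool) : R :=
  if b then p else 1 - p.

Definition PLambda (R : realType) (n m : nat) (L : 'M[R]_(n, m))
  (x : {ffun 'I_n * 'I_m -> bool}) : R :=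
  \prod_(ij : 'I_n * 'I_m) bern_pmf (1 - expR (- L ij.1 ij.2)) (x ij).

Definition frob2 (R : realType) (n m : nat) (A : 'M[R]_(n, m)) : R :=
  \sum_(i < n) \sum_(j < m) (A i j) ^+ 2.

Definition in_LK (R : realType) (n m K : nat) (c0 C0 lbar : R)
  (L : 'M[R]_(n, m)) : Prop :=
  (\rank L <= K)%N /\
  (forall i j, c0 * lbar <= L i j /\ L i j <= C0 * lbar).

(* Main.v *)
Require Import Defs.
From HB Require Import structures.
From mathcomp Require Import all_boot all_order all_algebra.
From mathcomp Require Import all_classical all_reals all_analysis.
Import Order.TTheory GRing.Theory Num.Theory.
Local Open Scope ring_scope.
From mathcomp Require Import ring lra.

Section S.
Variable R : realType.
Lemma exp_facts (x y : R) : 0 <= x -> 0 <= y -> x <= 2^-1 -> y <= 2^-1 ->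
  let u := expR (- x) in let v := expR (- y) in
  [/\ 0 < u, 2^-1 <= u, u <= 1, 1 - u <= x & 1 - v >= v * y] /\
  (y - x)^+2 / 4 <= (u - v)^+2 <= (y - x)^+2.
Proof.
move=> x0 y0 x1 y1 u v.
have u0 : 0 < u by apply: expR_gt0.
have v0 : 0 < v by apply: expR_gt0.
have ul : 1 - x <= u by have := expR_ge1Dx (- x); rewrite /u; lra.
have vl : 1 - y <= v by have := expR_ge1Dx (- y); rewrite /v; lra.
have ue : expR x * u = 1 by rewrite /u expRxMexpNx_1.
have ve : expR y * v = 1 by rewrite /v expRxMexpNx_1.
have ex := expR_ge1Dx x; have ey := expR_ge1Dx y.
have uv : u = v * expR (y - x) by rewrite /u /v -expRD; congr expR; ring.
have vu : v = u * expR (x - y) by rewrite /u /v -expRD; congr expR; ring.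
have w1 := expR_ge1Dx (y - x); have w2 := expR_ge1Dx (x - y).
have u1 : u <= 1 by nra.
have v1 : v <= 1 by nra.
have b1 : v * (y - x) <= u - v by nra.
have b2 : u - v <= u * (y - x) by nra.
split; first by split; nra.
case: (lerP 0 (y - x)) => t0.
  have c1 : (y - x) / 2 <= u - v by nra.
  have c2 : u - v <= y - x by nra.
  apply/andP; split; nra.
have c1 : u - v <= (y - x) / 2 by nra.
have c2 : y - x <= u - v by nra.
apply/andP; split; nra.
Qed.

Lemma ln_le_sub1 (x : R) : 0 < x -> ln x <= x - 1.
Proof.
move=> x0; have := @le_ln1Dx R (x - 1); rewrite [1 + _]addrC subrK; apply; lra.
Qed.

Lemma kl_upper (p q : R) : 0 < p < 1 -> 0 < q < 1 ->
  p * ln (p / q) + (1 - p) * ln ((1 - p) / (1 - q)) <= (p - q)^+2 / (q * (1 - q)).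
Proof.
move=> /andP[p0 p1] /andP[q0 q1].
have h1 : p * ln (p / q) <= p * (p / q - 1).
  by apply: ler_wpM2l; [exact: ltW | apply: ln_le_sub1; rewrite divr_gt0].
have h2 : (1 - p) * ln ((1 - p) / (1 - q)) <= (1 - p) * ((1 - p) / (1 - q) - 1).
  apply: ler_wpM2l; first lra.
  by apply: ln_le_sub1; rewrite divr_gt0 //; lra.
have -> : (p - q)^+2 / (q * (1 - q)) = p * (p / q - 1) + (1 - p) * ((1 - p) / (1 - q) - 1).
  field; apply/andP; split; rewrite ?subr_eq0; apply/negP => /eqP; lra.
lra.
Qed.

Lemma kl_lower (p q : R) : 0 < p < 1 -> 0 < q < 1 ->
  (Num.sqrt p - Num.sqrt q)^+2 <= p * ln (p / q) + (1 - p) * ln ((1 - p) / (1 - q)).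
Proof.
move=> /andP[p0 p1] /andP[q0 q1].
have key : forall s t : R, 0 < s -> 0 < t ->
    2 * (s - Num.sqrt s * Num.sqrt t) <= s * ln (s / t).
  move=> s t s0 t0.
  set a := Num.sqrt s; set b := Num.sqrt t.
  have a0 : 0 < a by rewrite sqrtr_gt0.
  have b0 : 0 < b by rewrite sqrtr_gt0.
  have sa : s = a ^+ 2 by rewrite sqr_sqrtr // ltW.
  have tb : t = b ^+ 2 by rewrite sqr_sqrtr // ltW.
  have -> : s / t = (a / b) ^+ 2 by rewrite expr_div_n -sa -tb.
  rewrite lnXn ?divr_gt0 //.
  have : ln (b / a) <= b / a - 1 by apply: ln_le_sub1; rewrite divr_gt0.
  have -> : ln (b / a) = - ln (a / b).
    have -> : b / a = (a / b)^-1 by rewrite invf_div.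
    by rewrite lnV // posrE divr_gt0.
  move=> h.
  have e : s * (b / a) = a * b by rewrite sa; field; rewrite gt_eqF.
  have h2 : s * (1 - b / a) <= s * ln (a / b).
    apply: ler_wpM2l; [exact: ltW | lra].
  rewrite mulrBr mulr1 e in h2.
  rewrite -mulr_natl; nra.
have k1 := key p q p0 q0.
have k2 := key (1 - p) (1 - q) ltac:(lra) ltac:(lra).
have sp : Num.sqrt p ^+ 2 = p by rewrite sqr_sqrtr // ltW.
have sq : Num.sqrt q ^+ 2 = q by rewrite sqr_sqrtr // ltW.
have sp' : Num.sqrt (1 - p) ^+ 2 = 1 - p by rewrite sqr_sqrtr //; lra.
have sq' : Num.sqrt (1 - q) ^+ 2 = 1 - q by rewrite sqr_sqrtr //; lra.
have h := sqr_ge0 (Num.sqrt (1 - p) - Num.sqrt (1 - q)).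
move: k1 k2 h sp sq sp' sq'.
set a := Num.sqrt p; set b := Num.sqrt q; set c := Num.sqrt (1 - p); set d := Num.sqrt (1 - q).
set K1 := p * ln _; set K2 := (1 - p) * ln _.
move=> k1 k2 h sp sq sp' sq'.
nra.
Qed.


Lemma coord (c0 C0 lb x y : R) : 0 < c0 -> 0 < lb -> C0 * lb <= 2^-1 ->
  c0 * lb <= x <= C0 * lb -> c0 * lb <= y <= C0 * lb ->
  let p := 1 - expR (- x) in let q := 1 - expR (- y) in
  (1 / (16 * C0)) / lb * (x - y)^+2 <= p * ln (p / q) + (1 - p) * ln ((1 - p) / (1 - q)) /\
  p * ln (p / q) + (1 - p) * ln ((1 - p) / (1 - q)) <= (4 / c0) / lb * (x - y)^+2.
Proof.
move=> c00 lb0 hC /andP[x0 x1] /andP[y0 y1] p q.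
have cl : 0 < c0 * lb by apply: mulr_gt0.
have Cl : 0 < C0 * lb by lra.
have C00 : 0 < C0 by move: Cl; rewrite pmulr_lgt0.
have [[u0 uh u1 ux vyy] /andP[sq1 sq2]] := exp_facts x y (ltW (lt_le_trans cl x0)) (ltW (lt_le_trans cl y0))
   (le_trans x1 hC) (le_trans y1 hC).
have [[v0 vh v1 vy vv] _] := exp_facts y x (ltW (lt_le_trans cl y0)) (ltW (lt_le_trans cl x0))
   (le_trans y1 hC) (le_trans x1 hC).
have xy2 : (x - y)^+2 = (y - x)^+2 by ring.
rewrite xy2.
have pq : p - q = expR (- y) - expR (- x) by rewrite /p /q; ring.
have ux1 : expR (- x) < 1 by rewrite expR_lt1 oppr_lt0; lra.
have vy1 : expR (- y) < 1 by rewrite expR_lt1 oppr_lt0; lra.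
have pr : 0 < p < 1 by rewrite /p; apply/andP; split; lra.
have qr : 0 < q < 1 by rewrite /q; apply/andP; split; lra.
split.
  have KL := kl_lower p q pr qr.
  apply: le_trans _ KL.
  set M := 1 / (16 * C0) / lb.
  have M0 : 0 < M by rewrite /M !divr_gt0 //; lra.
  have HM : M * (16 * (C0 * lb)) = 1 by rewrite /M; field; apply/andP; split; rewrite gt_eqF.
  have sp : Num.sqrt p ^+ 2 = p by rewrite sqr_sqrtr //; lra.
  have sq : Num.sqrt q ^+ 2 = q by rewrite sqr_sqrtr //; lra.
  have a0 : 0 <= Num.sqrt p by apply: sqrtr_ge0.
  have b0 : 0 <= Num.sqrt q by apply: sqrtr_ge0.
  have pC : p <= C0 * lb by rewrite /p; lra.
  have qC : q <= C0 * lb by rewrite /q; lra.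
  move: sp sq a0 b0; set a := Num.sqrt p; set b := Num.sqrt q => sp sq a0 b0.
  have e1 : (p - q)^+2 = (a - b)^+2 * (a + b)^+2 by rewrite -sp -sq; ring.
  have e2 : (a + b)^+2 <= 4 * (C0 * lb) by nra.
  have e3 : (p - q)^+2 <= (a - b)^+2 * (4 * (C0 * lb)).
    rewrite e1; apply: ler_wpM2l; [exact: sqr_ge0 | exact: e2].
  have e4 : (y - x)^+2 <= (a - b)^+2 * (16 * (C0 * lb)).
    have : (y - x)^+2 / 4 <= (p - q)^+2 by rewrite pq -[(_ - expR _)^+2]sqrrN opprB.
    lra.
  have : M * (y - x)^+2 <= M * ((a - b)^+2 * (16 * (C0 * lb))).
    by apply: ler_wpM2l; [exact: ltW | exact: e4].
  have -> : M * ((a - b)^+2 * (16 * (C0 * lb))) = (a - b)^+2 * (M * (16 * (C0 * lb))) by ring.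
  by rewrite HM mulr1.
apply: le_trans (kl_upper p q pr qr) _.
set K := 4 / c0 / lb.
have K0 : 0 < K by rewrite /K !divr_gt0 //; lra.
have HK : K * (c0 * lb / 4) = 1 by rewrite /K; field; apply/andP; split; rewrite gt_eqF.
have D : c0 * lb / 4 <= q * (1 - q) by rewrite /q; nra.
have D0 : 0 < c0 * lb / 4 by lra.
rewrite ler_pdivrMr; last by lra.
have h1 : (p - q)^+2 <= (y - x)^+2 by rewrite pq -[(_ - expR _)^+2]sqrrN opprB.
have h2 : K * (y - x)^+2 * (c0 * lb / 4) <= K * (y - x)^+2 * (q * (1 - q)).
  apply: ler_wpM2l => //; apply: mulr_ge0; [exact: ltW | exact: sqr_ge0].
have h3 : K * (y - x)^+2 * (c0 * lb / 4) = (y - x)^+2 by rewrite mulrAC HK mul1r.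
lra.
Qed.

Lemma ln_prod (I : finType) (F : I -> R) : (forall i, 0 < F i) ->
  ln (\prod_i F i) = \sum_i ln (F i).
Proof.
move=> F0.
pose K (a b : R) := 0 < a /\ ln a = b.
have : K (\prod_i F i) (\sum_i ln (F i)).
  apply: (big_rec2 K); first by split; [exact: ltr01 | exact: ln1].
  move=> i a b _ [a0 <-]; split; first by apply: mulr_gt0.
  by rewrite lnM // posrE.
by case.
Qed.

Lemma marg (I J : finType) (F : I -> J -> R) (h : J -> R) (k : I) :
  (forall i, \sum_j F i j = 1) ->
  \sum_(x : {ffun I -> J}) (\prod_i F i (x i)) * h (x k) = \sum_j F k j * h j.
Proof.
move=> F1.
pose G i j := if i == k then F i j * h j else F i j.
have -> : \sum_(x : {ffun I -> J}) (\prod_i F i (x i)) * h (x k)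
        = \sum_(x : {ffun I -> J}) \prod_i G i (x i).
  apply: eq_bigr => x _.
  rewrite (bigD1 k) //= [in RHS](bigD1 k) //= /G eqxx.
  rewrite mulrAC; congr (_ * _).
  by apply: eq_bigr => i /negbTE ->.
rewrite -bigA_distr_bigA /= (bigD1 k) //= [X in _ * X]big1 ?mulr1.
  by apply: eq_bigr => j _; rewrite /G eqxx.
by move=> i /negbTE ik; rewrite -(F1 i); apply: eq_bigr => j _; rewrite /G ik.
Qed.

Lemma dKL_prod (I J : finType) (F G : I -> J -> R) :
  (forall i j, 0 < F i j) -> (forall i j, 0 < G i j) -> (forall i, \sum_j F i j = 1) ->
  dKL (fun x : {ffun I -> J} => \prod_i F i (x i)) (fun x => \prod_i G i (x i))
  = \sum_i \sum_j F i j * ln (F i j / G i j).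
Proof.
move=> F0 G0 F1; rewrite /dKL.
have -> : \sum_(x : {ffun I -> J}) (\prod_i F i (x i)) * ln ((\prod_i F i (x i)) / \prod_i G i (x i))
   = \sum_(x : {ffun I -> J}) \sum_i (\prod_i F i (x i)) * ln (F i (x i) / G i (x i)).
  apply: eq_bigr => x _; rewrite -prodf_div ln_prod ?mulr_sumr //.
  by move=> i; apply: divr_gt0.
rewrite exchange_big /=; apply: eq_bigr => i _.
exact: (@marg I J F (fun j => ln (F i j / G i j)) i F1).
Qed.

End S.

Theorem theoremL6 (R : realType) (c0 C0 : R) :
  0 < c0 -> c0 < C0 ->
  exists CL CU : R, 0 < CL /\ 0 < CU /\
    forall (lbar : R) (K n m : nat) (L L' : 'M[R]_(n, m)),
      0 < lbar -> C0 * lbar <= 2^-1 -> (1 <= K)%N ->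
      in_LK K c0 C0 lbar L -> in_LK K c0 C0 lbar L' ->
      CL / lbar * frob2 (L - L') <= dKL (PLambda L) (PLambda L') /\
      dKL (PLambda L) (PLambda L') <= CU / lbar * frob2 (L - L').
Proof.
move=> c00 cC.
have C00 : 0 < C0 by lra.
exists (1 / (16 * C0)), (4 / c0); split; first by rewrite divr_gt0 //; lra.
split; first by rewrite divr_gt0 //; lra.
move=> lb K n m L L' lb0 hC _ [_ HL] [_ HL'].
pose p (ij : 'I_n * 'I_m) := 1 - expR (- L ij.1 ij.2).
pose q (ij : 'I_n * 'I_m) := 1 - expR (- L' ij.1 ij.2).
have pr : forall ij, 0 < p ij < 1.
  move=> ij; have [h1 h2] := HL ij.1 ij.2.
  have e1 : expR (- L ij.1 ij.2) < 1 by rewrite expR_lt1 oppr_lt0; apply: lt_le_trans h1; apply: mulr_gt0.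
  have e0 := expR_gt0 (- L ij.1 ij.2).
  by rewrite /p; apply/andP; split; lra.
have qr : forall ij, 0 < q ij < 1.
  move=> ij; have [h1 h2] := HL' ij.1 ij.2.
  have e1 : expR (- L' ij.1 ij.2) < 1 by rewrite expR_lt1 oppr_lt0; apply: lt_le_trans h1; apply: mulr_gt0.
  have e0 := expR_gt0 (- L' ij.1 ij.2).
  by rewrite /q; apply/andP; split; lra.
have EK : dKL (PLambda L) (PLambda L') =
   \sum_ij (p ij * ln (p ij / q ij) + (1 - p ij) * ln ((1 - p ij) / (1 - q ij))).
  rewrite /PLambda.
  rewrite (@dKL_prod R _ bool (fun ij b => bern_pmf (p ij) b) (fun ij b => bern_pmf (q ij) b)).
  - by apply: eq_bigr => ij _; rewrite big_bool.
  - by move=> ij [] /=; have := pr ij; lra.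
  - by move=> ij [] /=; have := qr ij; lra.
  - by move=> ij; rewrite big_bool /=; lra.
have EF : frob2 (L - L') = \sum_(ij : 'I_n * 'I_m) (L ij.1 ij.2 - L' ij.1 ij.2)^+2.
  by rewrite /frob2 pair_big /=; apply: eq_bigr => ij _; rewrite !mxE.
rewrite EK EF !mulr_sumr; split; apply: ler_sum => ij _;
  have [h1 h2] := HL ij.1 ij.2; have [h3 h4] := HL' ij.1 ij.2;
  have := @coord R c0 C0 lb (L ij.1 ij.2) (L' ij.1 ij.2) c00 lb0 hC
    ltac:(apply/andP; split => //) ltac:(apply/andP; split => //);
  by case.
Qed.
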